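(* Let $i:B\to A$ be a $k$-linear $X$-functor from a diagonal $k$-linear category $B$ to a $k$-linear category $A$, and assume that $A_{xy}$ is a finitely generated projective left $B_x$-module for all $x,y\in X$. Let $\mathcal{A}={}_B{\rm End}(A)$. For a descent datum $(M,\sigma)$, define a right $\mathcal{A}$-action on $M$ by $mf=m_{<0>}f(m_{<1>})\in M_{xz}$ for $m\in M_{xy}$, $f\in\mathcal{A}^x_{yz}$. This defines a functor $\underline{\rm Desc}_B(A)\to\mathcal{M}_\mathcal{A}$, $(M,\sigma)\mapsto M$, acting as the identity on morphisms, and this functor is an isomorphism of categories.
   Context: Let $k$ be a commutative ring; unadorned $\otimes$ is over $k$. A $k$-linear category $A$ with class of objects $X$ consists of $k$-modules $A_{xy}$, associative compositions $A_{xy}\otimes A_{yz}\to A_{xz}$, $a\otimes b\mapsto ab$, and units $1_x\in A_{xx}$. A right $A$-module is a family $(M_{xy})_{x,y\in X}$ with maps $M_{xy}\otimes A_{yz}\to M_{xz}$, associative and unital. A diagonal $k$-linear category $B$ is a family of $k$-algebras $(B_x)_{x\in X}$. A $k$-linear $X$-functor $i:B\to A$ amounts to $k$-algebra morphisms $i_x:B_x\to A_{xx}$, making $A_{xy}$ a $B_x$-$B_y$-bimodule and $M_{xy}$ a right $B_y$-module. A descent datum $(M,\sigma)$ is a right $A$-module $M$ with $k$-linear maps $\sigma_{xy}:M_{xy}\to M_{xx}\otimes_{B_x}A_{xy}$, $\sigma_{xy}(m)=m_{<0>}\otimes_{B_x}m_{<1>}$, such that for all $m\in M_{xy}$, $a\in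 A_{yz}$: (i) $\sigma_{xz}(ma)=m_{<0>}\otimes_{B_x}m_{<1>}a$; (ii) $\sigma_{xx}(m_{<0>})\otimes_{B_x}m_{<1>}=m_{<0>}\otimes_{B_x}1_x\otimes_{B_x}m_{<1>}$; (iii) $m_{<0>}m_{<1>}=m$. Morphisms of descent data are right $A$-module morphisms $f$ with $f_{xx}(m_{<0>})\otimes_{B_x}m_{<1>}=\sigma'_{xy}(f_{xy}(m))$; the category is $\underline{\rm Desc}_B(A)$. A $k$-linear cluster $\mathcal{A}$ with objects $X$ is a family $(\mathcal{A}^x)_{x\in X}$ of $k$-linear categories with object class $X$; $\mathcal{A}^x_{yz}$ has unit $1^x_y\in\mathcal{A}^x_{yy}$. A right $\mathcal{A}$-module is a family $(M_{xy})$ of $k$-modules with maps $M_{xy}\otimes\mathcal{A}^x_{yz}\to M_{xz}$, $m\otimes f\mapsto mf$, with $m(fg)=(mf)g$ and $m1^x_y=m$; morphisms are families $\varphi_{xy}$ with $\varphi_{xz}(mf)=\varphi_{xy}(m)f$; the category is $\mathcal{M}_\mathcal{A}$. The left endocluster $\mathcal{A}={}_B{\rm End}(A)$ is given by $\mathcal{A}^x_{yz}={}_{B_x}{\rm Hom}(A_{xy},A_{xz})$ with multiplication $fg=g\circ f$ and unit $1^x_y={\rm id}_{A_{xy}}$. *)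

(* Defs.v *)
From HB Require Import structures.
From mathcomp Require Import all_boot all_order all_algebra.
Set Implicit Arguments.
Unset Strict Implicit.
Unset Printing Implicit Defensive.
Import GRing.Theory.
Local Open Scope ring_scope.

(* Tensor products over a ring R of a right R-module P and a left R-module Q *)
(* (resp. of P, an R-bimodule Q and a left module S).  An element of the     *)
(* tensor product is represented by a finite list of elementary tensors      *)
(* (p ⊗ q); two such lists denote the same element of P ⊗_R Q iff they have  *)
(* the same image under every R-balanced biadditive map into every abelian  *)
(* group (universal property of the tensor product).                        *)

Definition balanced (P Q G : zmodType) (R : Type)
  (rP : P -> R -> P) (lQ : R -> Q -> Q) (beta : P -> Q -> G) : Prop :=
  [/\ (forall p p' q, beta (p + p') q = beta p q + beta p' q),
      (forall p q q', beta p (q + q') = beta p q + beta p q') &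
      (forall p r q, beta (rP p r) q = beta p (lQ r q))].

Definition tens_eq (P Q : zmodType) (R : Type)
  (rP : P -> R -> P) (lQ : R -> Q -> Q) (l1 l2 : seq (P * Q)) : Prop :=
  forall (G : zmodType) (beta : P -> Q -> G), balanced rP lQ beta ->
    \sum_(u <- l1) beta u.1 u.2 = \sum_(u <- l2) beta u.1 u.2.

Definition balanced3 (P Q S G : zmodType) (R : Type)
  (rP : P -> R -> P) (lQ : R -> Q -> Q) (rQ : Q -> R -> Q) (lS : R -> S -> S)
  (beta : P -> Q -> S -> G) : Prop :=
  [/\ (forall p p' q s, beta (p + p') q s = beta p q s + beta p' q s),
      (forall p q q' s, beta p (q + q') s = beta p q s + beta p q' s),
      (forall p q s s', beta p q (s + s') = beta p q s + beta p q s'),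
      (forall p r q s, beta (rP p r) q s = beta p (lQ r q) s) &
      (forall p q r s, beta p (rQ q r) s = beta p q (lS r s))].

Definition tens3_eq (P Q S : zmodType) (R : Type)
  (rP : P -> R -> P) (lQ : R -> Q -> Q) (rQ : Q -> R -> Q) (lS : R -> S -> S)
  (l1 l2 : seq (P * Q * S)) : Prop :=
  forall (G : zmodType) (beta : P -> Q -> S -> G),
    balanced3 rP lQ rQ lS beta ->
    \sum_(u <- l1) beta u.1.1 u.1.2 u.2 = \sum_(u <- l2) beta u.1.1 u.1.2 u.2.

Section Cat.
Variables (k : comPzRingType) (X : Type) (hom : X -> X -> lmodType k).
Variable comp : forall x y z, hom x y -> hom y z -> hom x z.
Variable id1 : forall x, hom x x.

Definition klincat : Prop :=
  [/\ (forall x y z (c : k) (a a' : hom x y) (b : hom y z),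
         comp (c *: a + a') b = c *: comp a b + comp a' b),
      (forall x y z (c : k) (a : hom x y) (b b' : hom y z),
         comp a (c *: b + b') = c *: comp a b + comp a b'),
      (forall x y z w (a : hom x y) (b : hom y z) (e : hom z w),
         comp (comp a b) e = comp a (comp b e)),
      (forall x y (a : hom x y), comp (id1 x) a = a) &
      (forall x y (a : hom x y), comp a (id1 y) = a)].

(* A diagonal k-linear category: a family of k-algebras (B x), each given as *)
(* a ring together with its structure map eta x : k -> B x, a ring morphism  *)
(* with central image.                                                       *)
Definition kalg (B : X -> pzRingType) (eta : forall x, k -> B x) : Prop :=
  forall x,
  [/\ (forall c d, eta x (c + d) = eta x c + eta x d),
      (forall c d, eta x (c * d) = eta x c * eta x d),
      eta x 1 = 1 &
      (forall c b, eta x c * b = b * eta x c)].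

(* A k-linear X-functor i : B -> A, i.e. k-algebra maps i x : B x -> A_xx.  *)
Definition kfunctor (B : X -> pzRingType) (eta : forall x, k -> B x)
  (i : forall x, B x -> hom x x) : Prop :=
  forall x,
  [/\ (forall b b', i x (b + b') = i x b + i x b'),
      (forall b b', i x (b * b') = comp (i x b) (i x b')),
      i x 1 = id1 x &
      (forall c, i x (eta x c) = c *: id1 x)].

(* A_xy is a finitely generated projective left B_x-module: a direct summand *)
(* of a finite free left module B_x^n.                                       *)
Definition fgproj_left (B : X -> pzRingType) (i : forall x, B x -> hom x x)
  (x y : X) : Prop :=
  exists (n : nat) (p : hom x y -> 'I_n -> B x) (s : ('I_n -> B x) -> hom x y),
  [/\ (forall a a' j, p (a + a') j = p a j + p a' j),
      (forall b a j, p (comp (i x b) a) j = b * p a j),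
      (forall v w, s (fun j => v j + w j) = s v + s w),
      (forall b v, s (fun j => b * v j) = comp (i x b) (s v)) &
      (forall a, s (p a) = a)].

Definition rmodA (M : X -> X -> lmodType k)
  (act : forall x y z, M x y -> hom y z -> M x z) : Prop :=
  [/\ (forall x y z (c : k) (m m' : M x y) (a : hom y z),
         act _ _ _ (c *: m + m') a = c *: act _ _ _ m a + act _ _ _ m' a),
      (forall x y z (c : k) (m : M x y) (a a' : hom y z),
         act _ _ _ m (c *: a + a') = c *: act _ _ _ m a + act _ _ _ m a'),
      (forall x y z w (m : M x y) (a : hom y z) (b : hom z w),
         act _ _ _ (act _ _ _ m a) b = act _ _ _ m (comp a b)) &
      (forall x y (m : M x y), act _ _ _ m (id1 y) = m)].

Definition rmodA_morph (M M' : X -> X -> lmodType k)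
  (act : forall x y z, M x y -> hom y z -> M x z)
  (act' : forall x y z, M' x y -> hom y z -> M' x z)
  (phi : forall x y, M x y -> M' x y) : Prop :=
  (forall x y (c : k) (m m' : M x y), phi x y (c *: m + m') = c *: phi x y m + phi x y m')
  /\ (forall x y z (m : M x y) (a : hom y z), phi x z (act _ _ _ m a) = act' _ _ _ (phi x y m) a).

Section Desc.
Variables (B : X -> pzRingType) (i : forall x, B x -> hom x x).

Definition rB (M : X -> X -> lmodType k)
  (act : forall x y z, M x y -> hom y z -> M x z) (x : X) :
  M x x -> B x -> M x x := fun m b => act _ _ _ m (i b).
Definition lB (x y : X) : B x -> hom x y -> hom x y := fun b a => comp (i b) a.
Definition rBA (x : X) : hom x x -> B x -> hom x x := fun a b => comp a (i b).

(* Descent data (M, sigma): sigma x y m is a representative (list of        *)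
(* elementary tensors m_<0> ⊗ m_<1>) of sigma_xy(m) in M_xx ⊗_{B_x} A_xy.    *)
Definition descent (M : X -> X -> lmodType k)
  (act : forall x y z, M x y -> hom y z -> M x z)
  (sig : forall x y, M x y -> seq (M x x * hom x y)) : Prop :=
  [/\ rmodA act,
      (forall x y (c : k) (m m' : M x y),
         tens_eq (rB act (x:=x)) (@lB x y) (sig x y (c *: m + m'))
           ([seq (c *: u.1, u.2) | u <- sig x y m] ++ sig x y m')),
      (forall x y z (m : M x y) (a : hom y z),
         tens_eq (rB act (x:=x)) (@lB x z) (sig x z (act _ _ _ m a))
           [seq (u.1, comp u.2 a) | u <- sig x y m]),
      (forall x y (m : M x y),
         tens3_eq (rB act (x:=x)) (@lB x x) (@rBA x) (@lB x y)
           (flatten [seq [seq (v.1, v.2, u.2) | v <- sig x x u.1] | u <- sig x y m])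
           [seq (u.1, id1 x, u.2) | u <- sig x y m]) &
      (forall x y (m : M x y), \sum_(u <- sig x y m) act _ _ _ u.1 u.2 = m)].

Definition desc_morph (M M' : X -> X -> lmodType k)
  (act : forall x y z, M x y -> hom y z -> M x z)
  (sig : forall x y, M x y -> seq (M x x * hom x y))
  (act' : forall x y z, M' x y -> hom y z -> M' x z)
  (sig' : forall x y, M' x y -> seq (M' x x * hom x y))
  (phi : forall x y, M x y -> M' x y) : Prop :=
  rmodA_morph act act' phi /\
  (forall x y (m : M x y),
     tens_eq (rB act' (x:=x)) (@lB x y)
       [seq (phi x x u.1, u.2) | u <- sig x y m] (sig' x y (phi x y m))).

(* The left endocluster _B End(A): A^x_yz = _{B_x}Hom(A_xy, A_xz). *)
Record blin (x y z : X) := Blin {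
  bfun :> hom x y -> hom x z;
  _ : forall a a', bfun (a + a') = bfun a + bfun a';
  _ : forall (b : B x) a, bfun (comp (i b) a) = comp (i b) (bfun a)
}.

(* Right modules over the cluster _B End(A), with product fg = g \o f and   *)
(* unit id.  (k-module structure on A^x_yz is pointwise.)                   *)
Definition rmodEnd (M : X -> X -> lmodType k)
  (actE : forall x y z, M x y -> blin x y z -> M x z) : Prop :=
  [/\ (forall x y z (c : k) (m m' : M x y) (f : blin x y z),
         actE _ _ _ (c *: m + m') f = c *: actE _ _ _ m f + actE _ _ _ m' f),
      (forall x y z (c : k) (m : M x y) (f g h : blin x y z),
         (forall a, h a = c *: f a + g a) ->
         actE _ _ _ m h = c *: actE _ _ _ m f + actE _ _ _ m g),
      (forall x y z w (m : M x y) (f : blin x y z) (g : blin x z w)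
              (h : blin x y w),
         (forall a, h a = g (f a)) -> actE _ _ _ m h = actE _ _ _ (actE _ _ _ m f) g) &
      (forall x y (m : M x y) (f : blin x y y),
         (forall a, f a = a) -> actE _ _ _ m f = m)].

Definition rmodEnd_morph (M M' : X -> X -> lmodType k)
  (actE : forall x y z, M x y -> blin x y z -> M x z)
  (actE' : forall x y z, M' x y -> blin x y z -> M' x z)
  (phi : forall x y, M x y -> M' x y) : Prop :=
  (forall x y (c : k) (m m' : M x y), phi x y (c *: m + m') = c *: phi x y m + phi x y m')
  /\ (forall x y z (m : M x y) (f : blin x y z),
        phi x z (actE _ _ _ m f) = actE' _ _ _ (phi x y m) f).

Definition induced (M : X -> X -> lmodType k)
  (act : forall x y z, M x y -> hom y z -> M x z)
  (sig : forall x y, M x y -> seq (M x x * hom x y)) :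
  forall x y z, M x y -> blin x y z -> M x z :=
  fun x y z m f => \sum_(u <- sig x y m) act _ _ _ u.1 (f u.2).

End Desc.
End Cat.

(* Main.v *)
Require Import Defs.
From mathcomp Require Import all_boot all_order all_algebra.
From Stdlib Require Import FunctionalExtensionality ClassicalEpsilon.
Set Implicit Arguments.
Unset Strict Implicit.
Unset Printing Implicit Defensive.
Import GRing.Theory.
Local Open Scope ring_scope.

Lemma addf0 (G1 G2 : zmodType) (f : G1 -> G2) :
  (forall a b, f (a + b) = f a + f b) -> f 0 = 0.
Proof. move=> H; have h := H 0 0; rewrite addr0 in h.
by apply: (addrI (f 0)); rewrite -h addr0. Qed.

Lemma addf_sum (G1 G2 : zmodType) (f : G1 -> G2) :
  (forall a b, f (a + b) = f a + f b) ->
  forall (I : Type) (r : seq I) (F : I -> G1),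
  f (\sum_(j <- r) F j) = \sum_(j <- r) f (F j).
Proof. move=> H I r F; exact: (big_morph f H (addf0 H)). Qed.

Section Pf.
Variables (k : comPzRingType) (X : Type) (hom : X -> X -> lmodType k).
Variable comp : forall x y z, hom x y -> hom y z -> hom x z.
Variable id1 : forall x, hom x x.
Variables (B : X -> pzRingType) (eta : forall x, k -> B x)
  (i : forall x, B x -> hom x x).
Hypothesis Hcat : klincat comp id1.
Hypothesis Hfun : kfunctor comp id1 eta i.

Lemma compDl x y z (a a' : hom x y) (b : hom y z) :
  comp (a + a') b = comp a b + comp a' b.
Proof. by move: Hcat; rewrite /klincat ; case=> H _ _ _ _; have := H _ _ _ 1 a a' b; rewrite !scale1r. Qed.
Lemma compDr x y z (a : hom x y) (b b' : hom y z) :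
  comp a (b + b') = comp a b + comp a b'.
Proof. by move: Hcat; rewrite /klincat ; case=> _ H _ _ _; have := H _ _ _ 1 a b b'; rewrite !scale1r. Qed.
Lemma compZr x y z (c : k) (a : hom x y) (b b' : hom y z) :
  comp a (c *: b + b') = c *: comp a b + comp a b'.
Proof. by move: Hcat; rewrite /klincat ; case=> _ H _ _ _; rewrite H. Qed.
Lemma compA x y z w (a : hom x y) (b : hom y z) (e : hom z w) :
  comp (comp a b) e = comp a (comp b e).
Proof. by move: Hcat; rewrite /klincat ; case. Qed.
Lemma comp1l x y (a : hom x y) : comp (id1 x) a = a.
Proof. by move: Hcat; rewrite /klincat ; case. Qed.
Lemma comp1r x y (a : hom x y) : comp a (id1 y) = a.
Proof. by move: Hcat; rewrite /klincat ; case. Qed.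
Lemma comp_suml x y z (I : Type) (r : seq I) (F : I -> hom x y) (b : hom y z) :
  comp (\sum_(j <- r) F j) b = \sum_(j <- r) comp (F j) b.
Proof. exact: (addf_sum (fun a => compDl a^~ b)). Qed.
Lemma comp_sumr x y z (I : Type) (r : seq I) (F : I -> hom y z) (a : hom x y) :
  comp a (\sum_(j <- r) F j) = \sum_(j <- r) comp a (F j).
Proof. exact: (addf_sum (compDr a)). Qed.
Lemma iD x (b b' : B x) : i (b + b') = i b + i b'.
Proof. by case: (Hfun x). Qed.
Lemma iM x (b b' : B x) : i (b * b') = comp (i b) (i b').
Proof. by case: (Hfun x). Qed.
Lemma i_sum x (I : Type) (r : seq I) (F : I -> B x) :
  i (\sum_(j <- r) F j) = \sum_(j <- r) i (F j).
Proof. exact: (addf_sum (@iD x)). Qed.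

Lemma blinD x y z (f : blin comp i x y z) a a' : f (a + a') = f a + f a'.
Proof. by case: f. Qed.
Lemma blinL x y z (f : blin comp i x y z) (b : B x) a :
  f (comp (i b) a) = comp (i b) (f a).
Proof. by case: f. Qed.
Lemma blin_sum x y z (f : blin comp i x y z) (I : Type) (r : seq I) F :
  f (\sum_(j <- r) F j) = \sum_(j <- r) f (F j).
Proof. exact: (addf_sum (@blinD x y z f)). Qed.


Record pdat (x y : X) := PD {
  pn : nat;
  pp : hom x y -> 'I_pn -> B x;
  ps : ('I_pn -> B x) -> hom x y;
  ppD : forall a a' j, pp (a + a') j = pp a j + pp a' j;
  ppL : forall b a j, pp (comp (i b) a) j = b * pp a j;
  psD : forall v w, ps (fun j => v j + w j) = ps v + ps w;
  psL : forall b v, ps (fun j => b * v j) = comp (i b) (ps v);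
  psp : forall a, ps (pp a) = a }.
Arguments pp {x y} p _ _.
Arguments ps {x y} p _.
Arguments psL {x y} p b v.
Arguments psD {x y} p v w.
Arguments psp {x y} p a.
Arguments ppD {x y} p a a' j.
Arguments ppL {x y} p b a j.

Definition delta x n (j : 'I_n) : 'I_n -> B x := fun j' => if j' == j then 1 else 0.
Definition pe x y (d : pdat x y) (j : 'I_(pn d)) : hom x y := ps d (delta x j).
Arguments pe {x y} d j.

Lemma ps0 x y (d : pdat x y) : ps d (fun _ => 0) = 0.
Proof.
have h := psD d (fun _ => 0) (fun _ => 0).
have e : (fun j : 'I_(pn d) => (0 : B x) + 0) = (fun _ => 0).
  by apply: functional_extensionality => j; rewrite addr0.
rewrite e in h. by apply: (addrI (ps d (fun _ => 0))); rewrite -h addr0.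
Qed.

Lemma ps_sumf x y (d : pdat x y) (I : Type) (r : seq I) (F : I -> 'I_(pn d) -> B x) :
  ps d (fun j => \sum_(l <- r) F l j) = \sum_(l <- r) ps d (F l).
Proof.
elim: r => [|l r IH].
  rewrite big_nil -(ps0 d); congr (ps d _).
  by apply: functional_extensionality => j; rewrite big_nil.
rewrite big_cons -IH -psD; congr (ps d _).
by apply: functional_extensionality => j; rewrite big_cons.
Qed.

Lemma ps_dec x y (d : pdat x y) v :
  ps d v = \sum_(j < pn d) comp (i (v j)) (pe d j).
Proof.
have Hv : v = (fun j' => \sum_(j < pn d) v j * delta x j j').
  apply: functional_extensionality => j'.
  rewrite (bigD1 j') //= /delta eqxx mulr1 big1 ?addr0 // => j /negbTE.
  by rewrite eq_sym => ->; rewrite mulr0.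
rewrite {1}Hv ps_sumf; apply: eq_bigr => j _.
by rewrite psL.
Qed.

Lemma dec x y (d : pdat x y) (a : hom x y) :
  a = \sum_(j < pn d) comp (i (pp d a j)) (pe d j).
Proof. by rewrite -{1}(psp d a) ps_dec. Qed.

Lemma pp_sum x y (d : pdat x y) (I : Type) (r : seq I) (F : I -> hom x y) j :
  pp d (\sum_(l <- r) F l) j = \sum_(l <- r) pp d (F l) j.
Proof. exact: (addf_sum (fun a a' => ppD d a a' j)). Qed.

Lemma REP1 x y (P G : zmodType) (rb : P -> B x -> P) (beta : P -> hom x y -> G)
  (d : pdat x y) :
  balanced rb (lB comp i (x:=x) (y:=y)) beta ->
  forall p q, beta p q = \sum_(j < pn d) beta (rb p (pp d q j)) (pe d j).
Proof.
case=> bl br bb p q.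
rewrite {1}(dec d q) (addf_sum (br p)); apply: eq_bigr => j _.
by rewrite bb.
Qed.

Lemma REP x y (P G : zmodType) (rb : P -> B x -> P) (beta : P -> hom x y -> G)
  (d : pdat x y) (l : seq (P * hom x y)) :
  balanced rb (lB comp i (x:=x) (y:=y)) beta ->
  \sum_(u <- l) beta u.1 u.2 =
  \sum_(j < pn d) beta (\sum_(u <- l) rb u.1 (pp d u.2 j)) (pe d j).
Proof.
move=> Hb; have [bl _ _] := Hb.
rewrite (eq_bigr _ (fun u _ => REP1 d Hb u.1 u.2)) exchange_big /=.
apply: eq_bigr => j _.
by rewrite (addf_sum (fun p p' => bl p p' (pe d j))).
Qed.

Lemma TENS x y (P : zmodType) (rb : P -> B x -> P) (d : pdat x y)
  (l1 l2 : seq (P * hom x y)) :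
  (forall j, \sum_(u <- l1) rb u.1 (pp d u.2 j) = \sum_(u <- l2) rb u.1 (pp d u.2 j)) ->
  tens_eq rb (lB comp i (x:=x) (y:=y)) l1 l2.
Proof.
move=> H G beta Hb; rewrite (REP d l1 Hb) (REP d l2 Hb).
by apply: eq_bigr => j _; rewrite H.
Qed.


Section Act.
Variables (M : X -> X -> lmodType k) (act : forall x y z, M x y -> hom y z -> M x z).
Hypothesis Hr : rmodA comp id1 act.

Lemma actDl x y z (m m' : M x y) (a : hom y z) : act (m + m') a = act m a + act m' a.
Proof. by move: Hr; rewrite /rmodA; case=> H _ _ _; have := H _ _ _ 1 m m' a; rewrite !scale1r. Qed.
Lemma actZl x y z c (m : M x y) (a : hom y z) : act (c *: m) a = c *: act m a.
Proof.
move: Hr; rewrite /rmodA; case=> H _ _ _; have := H _ _ _ c m 0 a.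
by rewrite addr0 (addf0 (fun m m' => actDl m m' a)) addr0.
Qed.
Lemma actDr x y z (m : M x y) (a a' : hom y z) : act m (a + a') = act m a + act m a'.
Proof. by move: Hr; rewrite /rmodA; case=> _ H _ _; have := H _ _ _ 1 m a a'; rewrite !scale1r. Qed.
Lemma actZDr x y z c (m : M x y) (a a' : hom y z) :
  act m (c *: a + a') = c *: act m a + act m a'.
Proof. by move: Hr; rewrite /rmodA; case=> _ H _ _; rewrite H. Qed.
Lemma actA x y z w (m : M x y) (a : hom y z) (b : hom z w) :
  act (act m a) b = act m (comp a b).
Proof. by move: Hr; rewrite /rmodA; case. Qed.
Lemma act1 x y (m : M x y) : act m (id1 y) = m.
Proof. by move: Hr; rewrite /rmodA; case. Qed.
Lemma act_suml x y z (I : Type) (r : seq I) (F : I -> M x y) (a : hom y z) :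
  act (\sum_(j <- r) F j) a = \sum_(j <- r) act (F j) a.
Proof. exact: (addf_sum (fun m m' => actDl m m' a)). Qed.
Lemma act_sumr x y z (I : Type) (r : seq I) (F : I -> hom y z) (m : M x y) :
  act m (\sum_(j <- r) F j) = \sum_(j <- r) act m (F j).
Proof. exact: (addf_sum (actDr m)). Qed.

Lemma bal_act x y z (f : blin comp i x y z) :
  balanced (rB i act (x:=x)) (lB comp i (x:=x) (y:=y)) (fun p q => act p (f q)).
Proof.
split.
- by move=> p p' q; rewrite actDl.
- by move=> p q q'; rewrite blinD actDr.
- by move=> p r q; rewrite /rB /lB actA blinL.
Qed.

End Act.

Lemma sig_add (M : X -> X -> lmodType k) act sig x y (m m' : M x y) (G : zmodType) (beta : M x x -> hom x y -> G) :
  descent comp id1 i act sig ->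
  balanced (rB i act (x:=x)) (lB comp i (x:=x) (y:=y)) beta ->
  \sum_(u <- sig x y (m + m')) beta u.1 u.2 =
  \sum_(u <- sig x y m) beta u.1 u.2 + \sum_(u <- sig x y m') beta u.1 u.2.
Proof.
case=> _ Hl _ _ _ Hb.
have := Hl x y 1 m m' G beta Hb; rewrite scale1r => ->.
by rewrite big_cat big_map; congr (_ + _); apply: eq_bigr => u _; rewrite scale1r.
Qed.

Lemma sig_sum (M : X -> X -> lmodType k) act sig x y (I : Type) (r : seq I) (F : I -> M x y) (G : zmodType)
  (beta : M x x -> hom x y -> G) :
  descent comp id1 i act sig ->
  balanced (rB i act (x:=x)) (lB comp i (x:=x) (y:=y)) beta ->
  \sum_(u <- sig x y (\sum_(j <- r) F j)) beta u.1 u.2 =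
  \sum_(j <- r) \sum_(u <- sig x y (F j)) beta u.1 u.2.
Proof.
move=> Hd Hb.
exact: (addf_sum (f := fun m => \sum_(u <- sig x y m) beta u.1 u.2)
         (fun m m' => sig_add m m' Hd Hb)).
Qed.

Lemma part1 (M : X -> X -> lmodType k) (act : forall x y z, M x y -> hom y z -> M x z)
  (sig : forall x y, M x y -> seq (M x x * hom x y)) :
  descent comp id1 i act sig -> @rmodEnd k X hom comp B i M (@induced k X hom comp B i M act sig).
Proof.
move=> Hd; have [Hr Hl Hi Hii Hiii] := Hd.
split.
- move=> x y z c m m' f; rewrite /induced.
  rewrite (Hl x y c m m' _ _ (bal_act Hr f)) big_cat big_map /= scaler_sumr.
  by congr (_ + _); apply: eq_bigr => u _; rewrite (actZl Hr).
- move=> x y z c m f g h Hh; rewrite /induced scaler_sumr -big_split /=.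
  by apply: eq_bigr => u _; rewrite Hh (actZDr Hr).
- move=> x y z w m f g h Hh; rewrite /induced.
  rewrite (sig_sum _ _ Hd (bal_act Hr g)).
  have -> : \sum_(j <- sig x y m) \sum_(u <- sig x z (act _ _ _ j.1 (f j.2))) act _ _ _ u.1 (g u.2)
     = \sum_(j <- sig x y m) \sum_(v <- sig x x j.1) act _ _ _ v.1 (g (comp v.2 (f j.2))).
    apply: eq_bigr => u _.
    by rewrite (Hi x x z u.1 (f u.2) _ _ (bal_act Hr g)) big_map.
  have Hb3 : balanced3 (rB i act (x:=x)) (lB comp i (x:=x) (y:=x)) (rBA comp i (x:=x))
      (lB comp i (x:=x) (y:=y)) (fun p q s => act _ _ _ p (g (comp q (f s)))).
    split.
    + by move=> p p' q s; rewrite (actDl Hr).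
    + by move=> p q q' s; rewrite compDl blinD (actDr Hr).
    + by move=> p q s s'; rewrite blinD compDr blinD (actDr Hr).
    + by move=> p r q s; rewrite /rB /lB (actA Hr) compA blinL.
    + by move=> p q r s; rewrite /rBA /lB compA blinL.
  have := Hii x y m _ _ Hb3; rewrite big_flatten big_map /= big_map /=.
  under eq_bigr do rewrite big_map /=.
  move=> ->; apply: eq_bigr => u _; by rewrite comp1l Hh.
- move=> x y m f Hf; rewrite /induced -{2}(Hiii x y m).
  by apply: eq_bigr => u _; rewrite Hf.
Qed.


Definition Rb x y z (a : hom y z) : blin comp i x y z.
refine (@Blin _ _ _ comp _ i x y z (fun b => comp b a) _ _).
- by move=> b b'; rewrite compDl.
- by move=> r b; rewrite compA.
Defined.
Arguments Rb {x y z} a.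

Definition Pj x y (d : pdat x y) (j : 'I_(pn d)) : blin comp i x y x.
refine (@Blin _ _ _ comp _ i x y x (fun a => i (pp d a j)) _ _).
- by move=> a a'; rewrite ppD iD.
- by move=> r a; rewrite ppL iM.
Defined.
Arguments Pj {x y} d j.

Definition bcomp x y z w (f : blin comp i x y z) (g : blin comp i x z w) : blin comp i x y w.
refine (@Blin _ _ _ comp _ i x y w (fun a => g (f a)) _ _).
- by move=> a a'; rewrite !blinD.
- by move=> r a; rewrite !blinL.
Defined.

Definition bid x y : blin comp i x y y.
refine (@Blin _ _ _ comp _ i x y y (fun a => a) _ _) => //.
Defined.
Arguments bid {x y}.

Definition bsum x y z (I : Type) (r : seq I) (F : I -> blin comp i x y z) : blin comp i x y z.
refine (@Blin _ _ _ comp _ i x y z (fun a => \sum_(l <- r) F l a) _ _).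
- by move=> a a'; rewrite -big_split; apply: eq_bigr => l _; rewrite blinD.
- by move=> b a; rewrite comp_sumr; apply: eq_bigr => l _; rewrite blinL.
Defined.

Lemma act_induced (M : X -> X -> lmodType k) (act : forall x y z, M x y -> hom y z -> M x z)
  (sig : forall x y, M x y -> seq (M x x * hom x y)) x y z (m : M x y) (a : hom y z) :
  descent comp id1 i act sig ->
  @induced k X hom comp B i M act sig x y z m (Rb a) = act _ _ _ m a.
Proof.
case=> Hr _ _ _ Hiii; rewrite /induced /=.
rewrite -{2}(Hiii x y m) (act_suml Hr); apply: eq_bigr => u _.
by rewrite (actA Hr).
Qed.

Lemma pdat_inh x y : fgproj_left comp i x y -> inhabited (pdat x y).
Proof.
case=> n [p [s [H1 H2 H3 H4 H5]]].
exact: (inhabits (PD H1 H2 H3 H4 H5)).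
Qed.

Lemma lin_add (M M' : X -> X -> lmodType k) (phi : forall x y, M x y -> M' x y) :
  (forall x y (c : k) (m m' : M x y), phi x y (c *: m + m') = c *: phi x y m + phi x y m') ->
  forall x y (m m' : M x y), phi x y (m + m') = phi x y m + phi x y m'.
Proof. by move=> H x y m m'; have := H x y 1 m m'; rewrite !scale1r. Qed.

Lemma part2 (M M' : X -> X -> lmodType k)
  (act : forall x y z, M x y -> hom y z -> M x z)
  (sig : forall x y, M x y -> seq (M x x * hom x y))
  (act' : forall x y z, M' x y -> hom y z -> M' x z)
  (sig' : forall x y, M' x y -> seq (M' x x * hom x y))
  (phi : forall x y, M x y -> M' x y) :
  (forall x y, fgproj_left comp i x y) ->
  descent comp id1 i act sig -> descent comp id1 i act' sig' ->
  (desc_morph comp i act sig act' sig' phi <->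
   @rmodEnd_morph k X hom comp B i M M'
     (@induced k X hom comp B i M act sig)
     (@induced k X hom comp B i M' act' sig') phi).
Proof.
move=> Hproj Hd Hd'.
have Hr : rmodA comp id1 act by case: Hd.
have Hr' : rmodA comp id1 act' by case: Hd'.
split.
- case=> [[phL phA] Ht]; split => // x y z m f; rewrite /induced.
  rewrite (addf_sum (lin_add phL (x:=x) (y:=z))).
  rewrite -(Ht x y m _ _ (bal_act Hr' f)) big_map /=.
  by apply: eq_bigr => u _; rewrite phA.
- case=> phL phA.
  have phA' : forall x y z (m : M x y) (a : hom y z),
      phi x z (act x y z m a) = act' x y z (phi x y m) a.
    by move=> x y z m a; rewrite -(act_induced _ _ Hd) phA (act_induced _ _ Hd').
  split; first by split.
  move=> x y m; case: (pdat_inh (Hproj x y)) => d.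
  apply: (@TENS x y (M' x x) _ d) => j; rewrite big_map /=.
  transitivity (@induced k X hom comp B i M' act' sig' x y x (phi x y m) (Pj d j)) => //.
  rewrite -phA /induced (addf_sum (lin_add phL (x:=x) (y:=x))).
  by apply: eq_bigr => u _; rewrite phA'.
Qed.

Lemma part4 (M : X -> X -> lmodType k)
  (act1 act2 : forall x y z, M x y -> hom y z -> M x z)
  (sig1 sig2 : forall x y, M x y -> seq (M x x * hom x y)) :
  (forall x y, fgproj_left comp i x y) ->
  descent comp id1 i act1 sig1 -> descent comp id1 i act2 sig2 ->
  (forall x y z (m : M x y) (f : blin comp i x y z),
     @induced k X hom comp B i M act1 sig1 x y z m f =
     @induced k X hom comp B i M act2 sig2 x y z m f) ->
  (forall x y z (m : M x y) (a : hom y z), act1 x y z m a = act2 x y z m a) /\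
  (forall x y (m : M x y),
     tens_eq (rB i act1 (x:=x)) (lB comp i (x:=x) (y:=y))
       (sig1 x y m) (sig2 x y m)).
Proof.
move=> Hproj Hd1 Hd2 Hind.
have Ha : forall x y z (m : M x y) (a : hom y z), act1 x y z m a = act2 x y z m a.
  by move=> x y z m a; rewrite -(act_induced _ _ Hd1) Hind (act_induced _ _ Hd2).
split => // x y m; case: (pdat_inh (Hproj x y)) => d.
apply: (@TENS x y (M x x) _ d) => j.
transitivity (@induced k X hom comp B i M act1 sig1 x y x m (Pj d j)) => //.
rewrite Hind /induced; apply: eq_bigr => u _; by rewrite /rB Ha.
Qed.

Definition Pc (Hp : forall x y, fgproj_left comp i x y) x y : pdat x y :=
  epsilon (pdat_inh (Hp x y)) (fun _ => True).

Section Surj.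
Variables (M : X -> X -> lmodType k) (actE : forall x y z, M x y -> blin comp i x y z -> M x z).
Hypothesis HE : @rmodEnd k X hom comp B i M actE.
Hypothesis Hp : forall x y, fgproj_left comp i x y.

Lemma aE_lin x y z c (m m' : M x y) (f : blin comp i x y z) :
  actE (c *: m + m') f = c *: actE m f + actE m' f.
Proof. by case: HE => E1 _ _ _; rewrite E1. Qed.
Lemma aE_ext x y z (m : M x y) (h1 h2 : blin comp i x y z) :
  (forall a, h1 a = h2 a) -> actE m h1 = actE m h2.
Proof.
case: HE => _ _ E3 E4 H.
by rewrite (E3 _ _ _ _ m h2 bid h1) // E4.
Qed.
Lemma aE_comp x y z w (m : M x y) (f : blin comp i x y z) (g : blin comp i x z w)
  (h : blin comp i x y w) :
  (forall a, h a = g (f a)) -> actE (actE m f) g = actE m h.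
Proof. by case: HE => _ _ E3 _ H; rewrite (E3 _ _ _ _ m f g h). Qed.
Lemma aE_sum x y z (m : M x y) (I : Type) (r : seq I) (F : I -> blin comp i x y z)
  (h : blin comp i x y z) :
  (forall a, h a = \sum_(l <- r) F l a) -> actE m h = \sum_(l <- r) actE m (F l).
Proof.
case: HE => _ E2 _ _.
elim: r h => [|l r IH] h Hh.
  rewrite big_nil.
  have := E2 _ _ _ 1 m h h h; rewrite scale1r => H.
  have e : actE m h = actE m h + actE m h.
    apply: H => a; rewrite scale1r Hh big_nil addr0 //.
  by apply: (addrI (actE m h)); rewrite -e addr0.
rewrite big_cons -(IH (bsum r F)) //.
have := E2 _ _ _ 1 m (F l) (bsum r F) h; rewrite scale1r; apply => a.
by rewrite scale1r Hh big_cons.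
Qed.

Definition actD x y z (m : M x y) (a : hom y z) : M x z := actE m (Rb a).
Definition sigD x y (m : M x y) : seq (M x x * hom x y) :=
  [seq (actE m (Pj (Pc Hp x y) j), pe (Pc Hp x y) j) | j <- index_enum 'I_(pn (Pc Hp x y))].

Lemma descD : descent comp id1 i actD sigD.
Proof.
have Hr : rmodA comp id1 actD.
  split.
  - by move=> x y z c m m' a; rewrite /actD aE_lin.
  - move=> x y z c m a a'; rewrite /actD; case: HE => _ E2 _ _; apply: E2 => b /=.
    by rewrite compZr.
  - move=> x y z w m a b; rewrite /actD (aE_comp _ (h := Rb (comp a b))) // => c /=.
    by rewrite compA.
  - move=> x y m; rewrite /actD; case: HE => _ _ _ E4; apply: E4 => b /=.
    by rewrite comp1r.
split => //.
- move=> x y c m m' G beta [bl br bb].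
  rewrite /sigD big_cat !big_map /= -big_split /=; apply: eq_bigr => j _.
  by rewrite aE_lin bl.
- move=> x y z m a G beta Hb.
  set d := Pc Hp x y; set d' := Pc Hp x z.
  rewrite [RHS](REP d' _ Hb) /sigD !big_map /=; apply: eq_bigr => l _; congr (beta _ _).
  rewrite !big_map /= /rB /actD.
  rewrite (aE_comp _ (h := bcomp (Rb a) (Pj d' l))) //.
  transitivity (\sum_(j < pn d)
     actE m (bcomp (Pj d j) (Rb (i (pp d' (comp (pe d j) a) l))))).
    apply: aE_sum => b /=.
    rewrite {1}(dec d b) comp_suml pp_sum i_sum; apply: eq_bigr => j _.
    by rewrite compA ppL iM.
  by apply: eq_bigr => j _; rewrite (aE_comp _ (h := bcomp (Pj d j) (Rb (i (pp d' (comp (pe d j) a) l))))).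
- move=> x y m G beta Hb3.
  set d := Pc Hp x y; set dx := Pc Hp x x.
  have [b1 b2 b3 b4 b5] := Hb3.
  rewrite big_flatten /= /sigD !big_map /=; apply: eq_bigr => j _.
  have Hb : balanced (rB i actD (x:=x)) (lB comp i (x:=x) (y:=x))
      (fun p q => beta p q (pe d j)).
    split.
    + by move=> p p' q; rewrite b1.
    + by move=> p q q'; rewrite b2.
    + by move=> p r q; rewrite b4.
  rewrite (REP1 dx Hb) !big_map; apply: eq_bigr => l _; congr (beta _ _ _).
  rewrite /rB /actD.
  rewrite (aE_comp _ (h := bcomp (Pj d j) (Pj dx l))) //.
  rewrite (aE_comp _ (h := bcomp (Pj d j) (Rb (i (pp dx (id1 x) l))))) //.
  apply: aE_ext => b /=.
  by rewrite -{1}[i (pp d b j)]comp1r ppL iM.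
- move=> x y m; rewrite /sigD big_map /= /actD.
  set d := Pc Hp x y.
  transitivity (\sum_(j < pn d) actE m (bcomp (Pj d j) (Rb (pe d j)))).
    by apply: eq_bigr => j _; rewrite (aE_comp _ (h := bcomp (Pj d j) (Rb (pe d j)))).
  rewrite -(aE_sum _ (h := bid)) => [|b /=]; last exact: dec.
  by case: HE => _ _ _ E4; apply: E4.
Qed.

Lemma indD x y z (m : M x y) (f : blin comp i x y z) :
  @induced k X hom comp B i M actD sigD x y z m f = actE m f.
Proof.
rewrite /induced /sigD big_map /= /actD.
set d := Pc Hp x y.
transitivity (\sum_(j < pn d) actE m (bcomp (Pj d j) (Rb (f (pe d j))))).
  by apply: eq_bigr => j _; rewrite (aE_comp _ (h := bcomp (Pj d j) (Rb (f (pe d j))))).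
symmetry; apply: aE_sum => b /=.
rewrite {1}(dec d b) blin_sum; apply: eq_bigr => j _.
by rewrite blinL.
Qed.

End Surj.

End Pf.
Theorem theorem5p3 (k : comPzRingType) (X : Type)
  (hom : X -> X -> lmodType k)
  (comp : forall x y z, hom x y -> hom y z -> hom x z)
  (id1 : forall x, hom x x)
  (B : X -> pzRingType) (eta : forall x, k -> B x)
  (i : forall x, B x -> hom x x) :
  klincat comp id1 -> kalg eta -> kfunctor comp id1 eta i ->
  (forall x y, fgproj_left comp i x y) ->
  [/\
   (* the induced action makes every descent datum a right _B End(A)-module *)
   (forall (M : X -> X -> lmodType k)
           (act : forall x y z, M x y -> hom y z -> M x z)
           (sig : forall x y, M x y -> seq (M x x * hom x y)),
      descent comp id1 i act sig ->
      @rmodEnd k X hom comp B i M (@induced k X hom comp B i M act sig)),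
   (* on morphisms: the identity, and it is a bijection on hom-sets *)
   (forall (M M' : X -> X -> lmodType k)
           (act : forall x y z, M x y -> hom y z -> M x z)
           (sig : forall x y, M x y -> seq (M x x * hom x y))
           (act' : forall x y z, M' x y -> hom y z -> M' x z)
           (sig' : forall x y, M' x y -> seq (M' x x * hom x y))
           (phi : forall x y, M x y -> M' x y),
      descent comp id1 i act sig -> descent comp id1 i act' sig' ->
      (desc_morph comp i act sig act' sig' phi <->
       @rmodEnd_morph k X hom comp B i M M'
         (@induced k X hom comp B i M act sig)
         (@induced k X hom comp B i M' act' sig') phi)),
   (* surjective on objects *)
   (forall (M : X -> X -> lmodType k)
           (actE : forall x y z, M x y -> blin comp i x y z -> M x z),
      @rmodEnd k X hom comp B i M actE ->
      exists (act : forall x y z, M x y -> hom y z -> M x z)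
             (sig : forall x y, M x y -> seq (M x x * hom x y)),
        descent comp id1 i act sig /\
        (forall x y z (m : M x y) (f : blin comp i x y z),
           @induced k X hom comp B i M act sig x y z m f = actE x y z m f)) &
   (* injective on objects *)
   (forall (M : X -> X -> lmodType k)
           (act1 act2 : forall x y z, M x y -> hom y z -> M x z)
           (sig1 sig2 : forall x y, M x y -> seq (M x x * hom x y)),
      descent comp id1 i act1 sig1 -> descent comp id1 i act2 sig2 ->
      (forall x y z (m : M x y) (f : blin comp i x y z),
         @induced k X hom comp B i M act1 sig1 x y z m f =
         @induced k X hom comp B i M act2 sig2 x y z m f) ->
      (forall x y z (m : M x y) (a : hom y z), act1 x y z m a = act2 x y z m a) /\
      (forall x y (m : M x y),
         tens_eq (rB i act1 (x:=x)) (lB comp i (x:=x) (y:=y))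
           (sig1 x y m) (sig2 x y m)))].
Proof.
move=> Hcat Hkalg Hfun Hp; split.
- move=> M act sig Hd; exact: (part1 Hcat Hd).
- move=> M M' act sig act' sig' phi Hd Hd'; exact: (part2 Hcat Hfun phi Hp Hd Hd').
- move=> M actE HE; exists (actD Hcat actE), (sigD Hfun actE Hp); split.
  + exact: (descD Hcat Hfun HE Hp).
  + move=> x y z m f; exact: (indD Hcat Hfun HE Hp m f).
- move=> M act1 act2 sig1 sig2 Hd1 Hd2 Hind; exact: (part4 Hcat Hfun Hp Hd1 Hd2 Hind).
Qed.
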